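(* Let $\phi$ be the real root of $x^3=x^2+x+1$. For $n\ge 3$, if $\langle a_i\rangle_{i=1}^n$ is a sequence of integers, not identically zero, with $a_i=a_{i-1}+a_{i-2}+a_{i-3}$ for $4\le i\le n$ and $a_n=0$, then either $|a_1|>0.01\phi^{n/2}$ or $|a_2|>0.01\phi^{(n-1)/2}$ (or both). *)

(* Defs.v *)
From Stdlib Require Import Reals ZArith Lia Lra.
Open Scope R_scope.

(* The tribonacci constant is characterized as a real number phi with
   phi^3 = phi^2 + phi + 1 (this cubic has exactly one real root). *)
Definition is_trib_root (phi : R) : Prop := phi ^ 3 = phi ^ 2 + phi + 1.

(* Main.v *)
Require Import Defs.
From Stdlib Require Import Reals ZArith.
From Stdlib Require Import Lra Lia.
Open Scope R_scope.

Lemma phib phi : phi^3 = phi^2+phi+1 -> 1.839 < phi < 1.8393.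
Proof. intros H.
  assert (Q: phi^2 + 0.839*phi + 0.5 > 0) by nra.
  assert (Q2: phi^2 + 0.8393*phi + 0.5 > 0) by nra.
  split.
  - destruct (Rlt_or_le 1.839 phi) as [h|h]; auto.
    assert (h2: (1.839 - phi) * (phi^2 + 0.839*phi + 0.5) >= 0) by (apply Rle_ge, Rmult_le_pos; lra).
    nra.
  - destruct (Rlt_or_le phi 1.8393) as [h|h]; auto.
    assert (h2: (phi - 1.8393) * (phi^2 + 0.8393*phi + 0.5) >= 0) by (apply Rle_ge, Rmult_le_pos; lra).
    nra.
Qed.
Definition qq (phi:R) := phi^2 - phi - 1.
Definition Qf (phi v0 v1 v2 : R) := (2*v2 - (1+phi)*v1 + phi*(1-phi)*v0)^2 + (4*qq phi - (1-phi)^2) * (v1 - phi*v0)^2.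
Definition Pf (phi v0 v1 v2 : R) := v2 + (phi-1)*v1 + qq phi * v0.

Lemma sq_le2 a b : (a+b)^2 <= 2*a^2 + 2*b^2.
Proof. assert (0 <= (a-b)^2) by apply pow2_ge_0. nra. Qed.
Lemma ml a b c : 0 <= c -> a <= b -> a*c <= b*c.
Proof. intros; apply Rmult_le_compat_r; auto. Qed.
Lemma sq0 a : 0 <= a^2.
Proof. apply pow2_ge_0. Qed.

Lemma Zsq (z:Z) : z <> 0%Z -> 1 <= IZR z ^ 2.
Proof. intros h. destruct (Z_lt_le_dec 0 z) as [h1|h1].
  - assert (1 <= IZR z) by (apply IZR_le; lia). nra.
  - assert (IZR z <= -1) by (apply IZR_le; lia). nra.
Qed.

Lemma final phi N A1 A2 A3 X Y :
  1.839 < phi < 1.8393 -> N >= 100 -> A1^2 <= 1/10000*phi^3*N -> A2^2 <= 1/10000*phi^2*N ->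
  1 <= X^2 + Y^2 ->
  Qf phi Y X 0 * N = Qf phi A1 A2 A3 -> Pf phi Y X 0 = N * Pf phi A1 A2 A3 -> False.
Proof.
  intros [p1 p2] hN h1 h2 hXY EQ EP.
  assert (ph2l: 3.3819 <= phi^2) by nra.
  assert (ph2u: phi^2 <= 3.3831) by nra.
  assert (ph3u: phi^3 <= 6.2226) by (replace (phi^3) with (phi^2*phi) by ring; nra).
  assert (ph4l: 11.43 <= phi^4) by (replace (phi^4) with (phi^2*phi^2) by ring; nra).
  assert (qql: 0.5429 <= qq phi) by (unfold qq; nra).
  assert (qqu: qq phi <= 0.5438) by (unfold qq; nra).
  set (t4 := 4*qq phi - (1-phi)^2).
  assert (t4l: 1.467 <= t4) by (unfold t4; nra).
  assert (t4u: t4 <= 1.476) by (unfold t4; nra).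
  set (Qe := Qf phi Y X 0).
  set (u := X - phi*Y).
  set (w := (1+phi)*X - phi*(1-phi)*Y).
  assert (HQe: Qe = w^2 + t4*u^2) by (unfold Qe, Qf, w, u, t4; ring).
  assert (HY: 2*phi^2*Y = w - (1+phi)*u) by (unfold w, u; ring).
  assert (HX: X = u + phi*Y) by (unfold u; ring).
  assert (Y1: 4*phi^4*Y^2 <= 2*w^2 + 2*(1+phi)^2*u^2).
  { replace (4*phi^4*Y^2) with ((w + (-(1+phi)*u))^2) by (replace (w + -(1+phi)*u) with (2*phi^2*Y) by (rewrite HY; ring); ring).
    replace (2*(1+phi)^2*u^2) with (2*(-(1+phi)*u)^2) by ring. apply sq_le2. }
  assert (opl: (1+phi)^2 <= 8.07) by nra.
  assert (u2 := sq0 u). assert (w2 := sq0 w). assert (y2 := sq0 Y). assert (x2 := sq0 X).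
  assert (Y2: 45.72*Y^2 <= 2*w^2 + 16.14*u^2).
  { assert (45.72*Y^2 <= 4*phi^4*Y^2) by (apply ml; lra).
    assert (2*(1+phi)^2*u^2 <= 16.14*u^2) by (replace (2*(1+phi)^2*u^2) with ((2*(1+phi)^2)*u^2) by ring; apply ml; lra). lra. }
  assert (X2: X^2 <= 2*u^2 + 6.767*Y^2).
  { rewrite HX. assert (h := sq_le2 u (phi*Y)).
    assert (2*(phi*Y)^2 <= 6.767*Y^2) by (replace (2*(phi*Y)^2) with ((2*phi^2)*Y^2) by ring; apply ml; lra). lra. }
  assert (t4u2: 1.467*u^2 <= t4*u^2) by (apply ml; lra).
  assert (QeXY: (X^2+Y^2)/4 <= Qe) by lra.
  assert (Qe14: 1/4 <= Qe) by lra.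
  set (Pe := Pf phi Y X 0).
  assert (PeB: Pe^2 <= 2*(X^2+Y^2)).
  { unfold Pe, Pf. replace (0 + (phi-1)*X + qq phi * Y) with ((phi-1)*X + qq phi*Y) by ring.
    assert (h := sq_le2 ((phi-1)*X) (qq phi*Y)).
    assert (((phi-1)*X)^2 <= X^2) by (replace (((phi-1)*X)^2) with ((phi-1)^2*X^2) by ring;
       rewrite <- (Rmult_1_l (X^2)) at 2; apply ml; nra).
    assert ((qq phi*Y)^2 <= Y^2) by (replace ((qq phi*Y)^2) with ((qq phi)^2*Y^2) by ring;
       rewrite <- (Rmult_1_l (Y^2)) at 2; apply ml; nra). lra. }
  set (P1 := Pf phi A1 A2 A3).
  assert (P1B: P1^2 <= 0.0008 * Qe).
  { assert (N^2*P1^2 <= 8*Qe) by (replace (N^2*P1^2) with (Pe^2) by (unfold Pe, P1; rewrite EP; ring); lra).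
    assert (10000*P1^2 <= N^2*P1^2) by (apply ml; [apply sq0| nra]). lra. }
  assert (HA3: A3 = P1 - (phi-1)*A2 - qq phi*A1) by (unfold P1, Pf; ring).
  assert (HQ1: Qf phi A1 A2 A3 = (2*P1 + ((1-3*phi)*A2 + (-2*qq phi + phi*(1-phi))*A1))^2 + t4*(A2 - phi*A1)^2)
    by (unfold Qf, t4; rewrite HA3; ring).
  assert (a1 := sq0 A1). assert (a2 := sq0 A2).
  assert (B1: (2*P1 + ((1-3*phi)*A2 + (-2*qq phi + phi*(1-phi))*A1))^2 <= 8*P1^2 + 4*(1-3*phi)^2*A2^2 + 4*(-2*qq phi + phi*(1-phi))^2*A1^2).
  { assert (h := sq_le2 (2*P1) ((1-3*phi)*A2 + (-2*qq phi + phi*(1-phi))*A1)).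
    assert (h' := sq_le2 ((1-3*phi)*A2) ((-2*qq phi + phi*(1-phi))*A1)).
    assert (E1: (2*P1)^2 = 4*P1^2) by ring.
    assert (E2: ((1-3*phi)*A2)^2 = (1-3*phi)^2*A2^2) by ring.
    assert (E3: ((-2*qq phi + phi*(1-phi))*A1)^2 = (-2*qq phi + phi*(1-phi))^2*A1^2) by ring.
    lra. }
  assert (al: (1-3*phi)^2 <= 20.42) by nra.
  assert (be: (-2*qq phi + phi*(1-phi))^2 <= 6.93) by (unfold qq; nra).
  assert (B2: t4*(A2 - phi*A1)^2 <= 2.952*A2^2 + 9.99*A1^2).
  { assert (h := sq_le2 A2 (-(phi*A1))).
    replace ((A2 + - (phi*A1))^2) with ((A2 - phi*A1)^2) in h by ring.
    assert (t4*(A2 - phi*A1)^2 <= 1.476*(A2 - phi*A1)^2) by (rewrite !(Rmult_comm _ ((A2 - phi*A1)^2)); apply Rmult_le_compat_l; [apply sq0|lra]).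
    assert ((-(phi*A1))^2 <= 3.3831*A1^2) by (replace ((-(phi*A1))^2) with (phi^2*A1^2) by ring; apply ml; lra). lra. }
  assert (C2: A2^2 <= 0.00033831*N) by (assert (1/10000*phi^2*N <= 0.00033831*N) by (apply ml; lra); lra).
  assert (C1: A1^2 <= 0.00062226*N) by (assert (1/10000*phi^3*N <= 0.00062226*N) by (apply ml; lra); lra).
  assert (D2: (1-3*phi)^2*A2^2 <= 20.42*A2^2) by (apply ml; lra).
  assert (D1: (-2*qq phi + phi*(1-phi))^2*A1^2 <= 6.93*A1^2) by (apply ml; lra).
  assert (Qe*N <= 0.0064*Qe + 0.06*N) by (fold Qe in EQ; lra).
  assert (0 <= (Qe - 1/4)*(N - 0.0064)) by (apply Rmult_le_pos; lra).
  nra.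
Qed.

Lemma Qstep phi v0 v1 v2 : phi^3 = phi^2+phi+1 -> Qf phi v1 v2 (v0+v1+v2) * phi = Qf phi v0 v1 v2.
Proof. intros H.
  assert (E: Qf phi v1 v2 (v0+v1+v2) * phi - Qf phi v0 v1 v2 = (phi^3-phi^2-phi-1) *
   ((4)*v2^2 + (-4)*v1*v2 + (-4)*v1^2 + (-4)*phi*v1*v2 + (-4)*phi*v0^2 + (4)*phi^2*v1^2)).
  { unfold Qf, qq. ring. }
  rewrite H in E. lra. Qed.
Lemma Pstep phi v0 v1 v2 : phi^3 = phi^2+phi+1 -> Pf phi v1 v2 (v0+v1+v2) = phi * Pf phi v0 v1 v2.
Proof. intros H. unfold Pf, qq.
  assert (E: phi * (v2 + (phi - 1) * v1 + (phi ^ 2 - phi - 1) * v0) = phi^3 * v0 + (phi^2-phi)*v1 + phi*v2 - (phi^2+phi)*v0) by ring.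
  rewrite E, H. ring. Qed.

Lemma pos_seq (n : nat) (b : nat -> Z)
  (hrec : forall i, (4 <= i <= n)%nat -> b i = (b (i-1)%nat + b (i-2)%nat + b (i-3)%nat)%Z)
  (h1 : b 1%nat = 0%Z) (h2 : b 2%nat = 0%Z) (h3 : (0 < b 3%nat)%Z) :
  forall i, (1 <= i <= n)%nat -> (0 <= b i)%Z /\ ((3 <= i)%nat -> (0 < b i)%Z).
Proof.
  intros i; induction i as [i IH] using (well_founded_induction lt_wf); intros hi.
  destruct (Nat.eq_dec i 1) as [->|]; [lia|].
  destruct (Nat.eq_dec i 2) as [->|]; [lia|].
  destruct (Nat.eq_dec i 3) as [->|]; [lia|].
  rewrite (hrec i) by lia.
  destruct (IH (i-1)%nat) as [A B]; [lia|lia|].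
  destruct (IH (i-2)%nat) as [C D]; [lia|lia|].
  destruct (IH (i-3)%nat) as [E F]; [lia|lia|].
  specialize (B ltac:(lia)). lia.
Qed.

Lemma zero_fwd (n : nat) (b : nat -> Z)
  (hrec : forall i, (4 <= i <= n)%nat -> b i = (b (i-1)%nat + b (i-2)%nat + b (i-3)%nat)%Z)
  (h1 : b 1%nat = 0%Z) (h2 : b 2%nat = 0%Z) (h3 : b 3%nat = 0%Z) :
  forall i, (1 <= i <= n)%nat -> b i = 0%Z.
Proof.
  intros i; induction i as [i IH] using (well_founded_induction lt_wf); intros hi.
  destruct (Nat.eq_dec i 1) as [->|]; [lia|].
  destruct (Nat.eq_dec i 2) as [->|]; [lia|].
  destruct (Nat.eq_dec i 3) as [->|]; [lia|].
  rewrite (hrec i) by lia.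
  rewrite (IH (i-1)%nat), (IH (i-2)%nat), (IH (i-3)%nat); lia.
Qed.

Lemma zero_start (n : nat) (hn : (3 <= n)%nat) (a : nat -> Z)
  (hnz : exists i, (1 <= i <= n)%nat /\ a i <> 0%Z)
  (hrec : forall i, (4 <= i <= n)%nat -> a i = (a (i-1)%nat + a (i-2)%nat + a (i-3)%nat)%Z)
  (hn0 : a n = 0%Z) (h1 : a 1%nat = 0%Z) (h2 : a 2%nat = 0%Z) : False.
Proof.
  destruct (Z.lt_trichotomy (a 3%nat) 0) as [h|[h|h]].
  - set (b := fun i => (- a i)%Z).
    assert (hb : forall i, (4 <= i <= n)%nat -> b i = (b (i-1)%nat + b (i-2)%nat + b (i-3)%nat)%Z)
      by (intros i hi; unfold b; rewrite hrec by lia; lia).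
    destruct (pos_seq n b hb ltac:(unfold b; lia) ltac:(unfold b; lia) ltac:(unfold b; lia) n ltac:(lia)) as [_ B].
    specialize (B hn). unfold b in B. lia.
  - destruct hnz as [i [hi hai]]. apply hai. apply (zero_fwd n a hrec h1 h2 h i hi).
  - destruct (pos_seq n a hrec h1 h2 h n ltac:(lia)) as [_ B]. specialize (B hn). lia.
Qed.

Lemma zero_bwd (n : nat) (hn : (3 <= n)%nat) (a : nat -> Z)
  (hrec : forall i, (4 <= i <= n)%nat -> a i = (a (i-1)%nat + a (i-2)%nat + a (i-3)%nat)%Z)
  (h0 : a n = 0%Z) (h1 : a (n-1)%nat = 0%Z) (h2 : a (n-2)%nat = 0%Z) :
  forall d, (d <= n - 1)%nat -> a (n - d)%nat = 0%Z.
Proof.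
  intros d; induction d as [d IH] using (well_founded_induction lt_wf); intros hd.
  destruct (Nat.eq_dec d 0) as [->|]; [rewrite Nat.sub_0_r; auto|].
  destruct (Nat.eq_dec d 1) as [->|]; [auto|].
  destruct (Nat.eq_dec d 2) as [->|]; [auto|].
  assert (E := hrec (n - d + 3)%nat ltac:(lia)).
  replace (n - d + 3 - 3)%nat with (n - d)%nat in E by lia.
  replace (n - d + 3)%nat with (n - (d-3))%nat in E by lia.
  replace (n - (d-3) - 1)%nat with (n - (d-2))%nat in E by lia.
  replace (n - (d-3) - 2)%nat with (n - (d-1))%nat in E by lia.
  rewrite (IH (d-3)%nat), (IH (d-2)%nat), (IH (d-1)%nat) in E; lia.
Qed.

Lemma iter_inv phi (hphi : phi^3 = phi^2+phi+1) (n : nat) (a : nat -> Z)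
  (hrec : forall i, (4 <= i <= n)%nat -> a i = (a (i-1)%nat + a (i-2)%nat + a (i-3)%nat)%Z) :
  forall k, (k + 3 <= n)%nat ->
    Qf phi (IZR (a (k+1)%nat)) (IZR (a (k+2)%nat)) (IZR (a (k+3)%nat)) * phi^k
      = Qf phi (IZR (a 1%nat)) (IZR (a 2%nat)) (IZR (a 3%nat)) /\
    Pf phi (IZR (a (k+1)%nat)) (IZR (a (k+2)%nat)) (IZR (a (k+3)%nat))
      = phi^k * Pf phi (IZR (a 1%nat)) (IZR (a 2%nat)) (IZR (a 3%nat)).
Proof.
  induction k as [|k IH]; intros hk.
  - simpl. split; ring.
  - destruct (IH ltac:(lia)) as [IQ IP].
    assert (E := hrec (k+4)%nat ltac:(lia)).
    replace (k+4-1)%nat with (k+3)%nat in E by lia.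
    replace (k+4-2)%nat with (k+2)%nat in E by lia.
    replace (k+4-3)%nat with (k+1)%nat in E by lia.
    replace (S k + 1)%nat with (k+2)%nat by lia.
    replace (S k + 2)%nat with (k+3)%nat by lia.
    replace (S k + 3)%nat with (k+4)%nat by lia.
    rewrite E, !plus_IZR.
    set (x1 := IZR (a (k+1)%nat)) in *. set (x2 := IZR (a (k+2)%nat)) in *. set (x3 := IZR (a (k+3)%nat)) in *.
    replace (x3 + x2 + x1) with (x1 + x2 + x3) by ring.
    assert (SQ := Qstep phi x1 x2 x3 hphi). assert (SP := Pstep phi x1 x2 x3 hphi).
    change (phi ^ S k) with (phi * phi ^ k).
    split.
    + rewrite <- IQ, <- SQ. ring.
    + rewrite SP, IP. ring.
Qed.

Theorem corollary2 (phi : R) (hphi : is_trib_root phi)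
  (n : nat) (hn : (3 <= n)%nat) (a : nat -> Z)
  (hnz : exists i, (1 <= i <= n)%nat /\ a i <> 0%Z)
  (hrec : forall i, (4 <= i <= n)%nat -> a i = (a (i-1)%nat + a (i-2)%nat + a (i-3)%nat)%Z)
  (hn0 : a n = 0%Z) :
  Rabs (IZR (a 1%nat)) > (1/100) * Rpower phi (INR n / 2) \/
  Rabs (IZR (a 2%nat)) > (1/100) * Rpower phi ((INR n - 1) / 2).
Proof.
  unfold is_trib_root in hphi.
  destruct (Rlt_le_dec ((1/100) * Rpower phi (INR n / 2)) (Rabs (IZR (a 1%nat)))) as [h|h1]; [left; lra|].
  destruct (Rlt_le_dec ((1/100) * Rpower phi ((INR n - 1) / 2)) (Rabs (IZR (a 2%nat)))) as [h|h2]; [right; lra|].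
  exfalso.
  assert (pb := phib phi hphi).
  assert (phpos : 0 < phi) by lra.
  assert (sqb : forall (A e : R), Rabs A <= 1/100 * Rpower phi e -> A^2 <= 1/10000 * Rpower phi (e+e)).
  { intros A e hA. rewrite Rpower_plus. rewrite <- pow2_abs.
    assert (0 <= Rabs A) by apply Rabs_pos.
    assert (0 < Rpower phi e) by (unfold Rpower; apply exp_pos). nra. }
  assert (H1 := sqb _ _ h1). assert (H2 := sqb _ _ h2).
  replace (INR n / 2 + INR n / 2) with (INR n) in H1 by field.
  replace ((INR n - 1) / 2 + (INR n - 1) / 2) with (INR (n-1)) in H2
    by (rewrite minus_INR by lia; simpl; field).
  rewrite Rpower_pow in H1, H2 by exact phpos.
  destruct (le_lt_dec n 10) as [small|big].
  - assert (phn : forall m, (m <= 10)%nat -> phi^m <= 1024).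
    { intros m hm. assert (phi^m <= phi^10) by (apply Rle_pow; [lra|lia]).
      assert (phi^10 <= 2^10) by (apply pow_incr; lra).
      assert (E : 2^10 = 1024) by ring. lra. }
    assert (z1 : a 1%nat = 0%Z).
    { destruct (Z.eq_dec (a 1%nat) 0) as [e|ne]; auto. assert (HZ := Zsq _ ne).
      assert (phi^n <= 1024) by (apply phn; lia). lra. }
    assert (z2 : a 2%nat = 0%Z).
    { destruct (Z.eq_dec (a 2%nat) 0) as [e|ne]; auto. assert (HZ := Zsq _ ne).
      assert (phi^(n-1) <= 1024) by (apply phn; lia). lra. }
    exact (zero_start n hn a hnz hrec hn0 z1 z2).
  - destruct (iter_inv phi hphi n a hrec (n-3) ltac:(lia)) as [IQ IP].
    replace (n-3+1)%nat with (n-2)%nat in IQ, IP by lia.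
    replace (n-3+2)%nat with (n-1)%nat in IQ, IP by lia.
    replace (n-3+3)%nat with n in IQ, IP by lia.
    rewrite hn0 in IQ, IP.
    assert (hXY : 1 <= IZR (a (n-1)%nat)^2 + IZR (a (n-2)%nat)^2).
    { destruct (Z.eq_dec (a (n-1)%nat) 0) as [e1|ne1].
      - destruct (Z.eq_dec (a (n-2)%nat) 0) as [e2|ne2].
        + exfalso. destruct hnz as [i [hi hai]]. apply hai.
          assert (E := zero_bwd n hn a hrec hn0 e1 e2 (n-i)%nat ltac:(lia)).
          replace (n - (n-i))%nat with i in E by lia. exact E.
        + assert (HZ := Zsq _ ne2). assert (0 <= IZR (a (n-1)%nat)^2) by apply pow2_ge_0. lra.
      - assert (HZ := Zsq _ ne1). assert (0 <= IZR (a (n-2)%nat)^2) by apply pow2_ge_0. lra. }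
    assert (hN : phi^(n-3) >= 100).
    { assert (phi^8 <= phi^(n-3)) by (apply Rle_pow; [lra|lia]).
      assert (1.839^8 <= phi^8) by (apply pow_incr; lra).
      assert (100 <= 1.839^8) by (simpl; lra). lra. }
    assert (E1 : phi^n = phi^3 * phi^(n-3)) by (rewrite <- pow_add; f_equal; lia).
    assert (E2 : phi^(n-1) = phi^2 * phi^(n-3)) by (rewrite <- pow_add; f_equal; lia).
    rewrite E1 in H1. rewrite E2 in H2.
    apply (final phi (phi^(n-3)) (IZR (a 1%nat)) (IZR (a 2%nat)) (IZR (a 3%nat))
             (IZR (a (n-1)%nat)) (IZR (a (n-2)%nat))); auto; lra.
Qed.
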